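(* Fix $m\ge1$ and $n\ge0$. Every labelled sequent derivable in $\mathsf{Ldm}_{n}^{m}\mathsf{L}$ is valid.
   Context: Language. $Ag=\{1,\dots,m\}$, $Var$ a countable set of propositional variables; formulas of $\mathcal{L}^m$: $\phi ::= p \mid \overline{p} \mid (\phi\wedge\phi) \mid (\phi\vee\phi) \mid \Box\phi \mid \Diamond\phi \mid [i]\phi \mid \langle i\rangle\phi$. Models. An $\mathsf{Ldm}_{n}^{m}$-frame is $(W,\{\mathcal{R}_i\}_{i\in Ag})$ with $W\neq\emptyset$ and: (C1) each $\mathcal{R}_i$ is an equivalence relation on $W$; (C2) for all $u_1,\dots,u_m\in W$, $\bigcap_{i\in Ag}\mathcal{R}_i(u_i)\neq\emptyset$, where $\mathcal{R}_i(w)=\{v:(w,v)\in\mathcal{R}_i\}$; (C3) only if $n>0$: for each $i$ and all $w_0,\dots,w_n\in W$ there are $0\le k<j\le n$ with $(w_k,w_j)\in\mathcal{R}_i$. A model adds $V:Var\to\mathcal{P}(W)$. Satisfaction: $w\Vdash p$ iff $w\in V(p)$; $w\Vdash\overline{p}$ iff $w\notin V(p)$; $\wedge,\vee$ as usual; $\Box,\Diamond$ quantify over all of $W$; $[i],\langle i\rangle$ quantify (universally, existentially) over $\mathcal{R}_i(w)$. Labelled sequents $\mathcal{R},\Gamma$: $\mathcal{R}$ a multiset of relational atoms $\mathcal{R}_ixy$, $\Gamma$ a multiset of labelled formulas $x:\phi$. Given a model $M$ with domain $W$ and an interpretation $I$ mapping labels to worlds, $\mathcal{R},\Gamma$ is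 satisfied in $M$ under $I$ iff, if $(x^I,y^I)\in\mathcal{R}_i$ holds for all relational atoms $\mathcal{R}_ixy\in\mathcal{R}$, then $M,z^I\Vdash\phi$ for some $z:\phi\in\Gamma$. A sequent is valid iff it is satisfied in every $\mathsf{Ldm}_{n}^{m}$-model under every interpretation. Rules of $\mathsf{Ldm}_{n}^{m}\mathsf{L}$ (premise(s) / conclusion): $(\mathsf{id})$: / $\mathcal{R}, w:p, w:\overline{p},\Gamma$. $(\wedge)$: $\mathcal{R}, w:\phi\wedge\psi, w:\phi,\Gamma$ and $\mathcal{R}, w:\phi\wedge\psi, w:\psi,\Gamma$ / $\mathcal{R}, w:\phi\wedge\psi,\Gamma$. $(\vee)$: $\mathcal{R}, w:\phi\vee\psi, w:\phi, w:\psi,\Gamma$ / $\mathcal{R}, w:\phi\vee\psi,\Gamma$. $(\Box)$: $\mathcal{R}, w:\Box\phi, v:\phi,\Gamma$ / $\mathcal{R}, w:\Box\phi,\Gamma$ ($v$ fresh). $(\Diamond)$: $\mathcal{R}, w:\Diamond\phi, u:\phi,\Gamma$ / $\mathcal{R}, w:\Diamond\phi,\Gamma$. $(\mathsf{IOA})$: $\mathcal{R},\mathcal{R}_1u_1v,\dots,\mathcal{R}_mu_mv,\Gamma$ / $\mathcal{R},\Gamma$ ($v$ fresh). $([i])$: $\mathcal{R},\mathcal{R}_iwv, w:[i]\phi, v:\phi,\Gamma$ / $\mathcal{R}, w:[i]\phi,\Gamma$ ($v$ fresh). $(\mathsf{Pr}_i)$: $\mathcal{R}, w:\langle i\rangle\phi,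 u:\phi,\Gamma$ / $\mathcal{R}, w:\langle i\rangle\phi,\Gamma$, applicable only if $w=u$ or there are labels $w=z_0,\dots,z_k=u$ ($k\ge1$) with $\mathcal{R}_iz_lz_{l+1}\in\mathcal{R}$ or $\mathcal{R}_iz_{l+1}z_l\in\mathcal{R}$ for each $l<k$. $(\mathsf{APC}^i_n)$ (only if $n>0$): premises $\mathcal{R},\mathcal{R}_iw_kw_j,\Gamma$ for all $0\le k\le n-1$, $k+1\le j\le n$ / $\mathcal{R},\Gamma$. ''Fresh'' means not occurring in the conclusion. One copy of $([i])$, $(\mathsf{Pr}_i)$, $(\mathsf{APC}^i_n)$ for each $i\in Ag$. *)

(* Defs.v *)
From mathcomp Require Import all_boot.
From Stdlib Require Import List Permutation.
Set Implicit Arguments. Unset Strict Implicit. Unset Printing Implicit Defensive.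

(* Formulas of L^m in negation normal form; agents Ag = 'I_m (m agents). *)
Inductive form (m : nat) : Type :=
  | FVar  : nat -> form m
  | FNVar : nat -> form m
  | FAnd  : form m -> form m -> form m
  | FOr   : form m -> form m -> form m
  | FBox  : form m -> form m
  | FDia  : form m -> form m
  | FAgB  : 'I_m -> form m -> form m
  | FAgD  : 'I_m -> form m -> form m.

Definition ratom (m : nat) : Type := ('I_m * nat * nat)%type.
Definition lform (m : nat) : Type := (nat * form m)%type.
(* labelled sequent R, Gamma; multisets as lists, closed under permutation below *)
Definition sequent (m : nat) : Type := (list (ratom m) * list (lform m))%type.

Definition labels (m : nat) (R : list (ratom m)) (G : list (lform m)) : list nat :=
  flat_map (fun a : ratom m => let '(_, x, y) := a in x :: y :: nil) R
  ++ map (fun l : lform m => fst l) G.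

Definition fresh (m : nat) (v : nat) (R : list (ratom m)) (G : list (lform m)) : Prop :=
  ~ In v (labels R G).

Inductive connected (m : nat) (i : 'I_m) (R : list (ratom m)) : nat -> nat -> Prop :=
  | conn_refl : forall w, connected i R w w
  | conn_step : forall z0 z1 u,
      (In (i, z0, z1) R \/ In (i, z1, z0) R) ->
      connected i R z1 u -> connected i R z0 u.

Inductive derivable (m n : nat) : list (ratom m) -> list (lform m) -> Prop :=
  | d_perm : forall R R' G G',
      Permutation R R' -> Permutation G G' ->
      derivable n R G -> derivable n R' G'
  | d_id : forall R G w p,
      derivable n R ((w, FVar m p) :: (w, FNVar m p) :: G)
  | d_and : forall R G w a b,
      derivable n R ((w, FAnd a b) :: (w, a) :: G) ->
      derivable n R ((w, FAnd a b) :: (w, b) :: G) ->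
      derivable n R ((w, FAnd a b) :: G)
  | d_or : forall R G w a b,
      derivable n R ((w, FOr a b) :: (w, a) :: (w, b) :: G) ->
      derivable n R ((w, FOr a b) :: G)
  | d_box : forall R G w v a,
      fresh v R ((w, FBox a) :: G) ->
      derivable n R ((w, FBox a) :: (v, a) :: G) ->
      derivable n R ((w, FBox a) :: G)
  | d_dia : forall R G w u a,
      derivable n R ((w, FDia a) :: (u, a) :: G) ->
      derivable n R ((w, FDia a) :: G)
  | d_IOA : forall R G (u : 'I_m -> nat) v,
      fresh v R G ->
      derivable n (map (fun i => (i, u i, v)) (enum 'I_m) ++ R) G ->
      derivable n R G
  | d_agB : forall R G (i : 'I_m) w v a,
      fresh v R ((w, FAgB i a) :: G) ->
      derivable n ((i, w, v) :: R) ((w, FAgB i a) :: (v, a) :: G) ->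
      derivable n R ((w, FAgB i a) :: G)
  | d_Pr : forall R G (i : 'I_m) w u a,
      connected i R w u ->
      derivable n R ((w, FAgD i a) :: (u, a) :: G) ->
      derivable n R ((w, FAgD i a) :: G)
  | d_APC : forall R G (i : 'I_m) (w : nat -> nat),
      0 < n ->
      (forall k j, k < j <= n -> derivable n ((i, w k, w j) :: R) G) ->
      derivable n R G.

Definition is_frame (m n : nat) (W : Type) (Rel : 'I_m -> W -> W -> Prop) : Prop :=
  inhabited W /\
  (forall i, (forall x, Rel i x x) /\ (forall x y, Rel i x y -> Rel i y x) /\
             (forall x y z, Rel i x y -> Rel i y z -> Rel i x z)) /\
  (forall u : 'I_m -> W, exists w, forall i, Rel i (u i) w) /\
  (0 < n -> forall i (w : nat -> W),
      exists k j, k < j <= n /\ Rel i (w k) (w j)).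

Fixpoint sat (m : nat) (W : Type) (Rel : 'I_m -> W -> W -> Prop) (V : nat -> W -> Prop)
         (w : W) (f : form m) : Prop :=
  match f with
  | FVar p => V p w
  | FNVar p => ~ V p w
  | FAnd a b => sat Rel V w a /\ sat Rel V w b
  | FOr a b => sat Rel V w a \/ sat Rel V w b
  | FBox a => forall v, sat Rel V v a
  | FDia a => exists v, sat Rel V v a
  | FAgB i a => forall v, Rel i w v -> sat Rel V v a
  | FAgD i a => exists v, Rel i w v /\ sat Rel V v a
  end.

Definition valid (m n : nat) (R : list (ratom m)) (G : list (lform m)) : Prop :=
  forall (W : Type) (Rel : 'I_m -> W -> W -> Prop) (V : nat -> W -> Prop),
    is_frame n Rel ->
    forall I : nat -> W,
      (forall i x y, In (i, x, y) R -> Rel i (I x) (I y)) ->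
      exists z f, In (z, f) G /\ sat Rel V (I z) f.

(* Main.v *)
Require Import Defs.
From mathcomp Require Import all_boot.
From Stdlib Require Import List Permutation Classical PeanoNat.

Lemma fresh_R (m : nat) v (R : list (ratom m)) G :
  fresh v R G -> forall i x y, In (i, x, y) R -> x <> v /\ y <> v.
Proof.
  move=> Hf i x y Hin; split => E; apply: Hf; rewrite /labels in_app_iff; left;
  apply/in_flat_map; exists (i, x, y); split => //=; subst; auto.
Qed.

Lemma fresh_G (m : nat) v (R : list (ratom m)) G :
  fresh v R G -> forall z f, In (z, f) G -> z <> v.
Proof.
  move=> Hf z f Hin E; apply: Hf; rewrite /labels in_app_iff; right;
  apply/in_map_iff; exists (z, f); subst; auto.
Qed.

Arguments fresh_R {m v R G}.
Arguments fresh_G {m v R G}.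

Definition upd {W : Type} (I : nat -> W) (v : nat) (x : W) : nat -> W :=
  fun y => if Nat.eqb y v then x else I y.

Lemma upd_same W (I : nat -> W) v x : upd I v x v = x.
Proof. by rewrite /upd Nat.eqb_refl. Qed.

Lemma upd_other W (I : nat -> W) v x y : y <> v -> upd I v x y = I y.
Proof. by move=> H; rewrite /upd; case: (Nat.eqb_spec y v). Qed.

Arguments upd_other {W} I v x y.
Arguments upd_same {W} I v x.

Lemma conn_rel (m : nat) (W : Type) (Rel : 'I_m -> W -> W -> Prop) i R (I : nat -> W) w u :
  (forall x, Rel i x x) -> (forall x y, Rel i x y -> Rel i y x) ->
  (forall x y z, Rel i x y -> Rel i y z -> Rel i x z) ->
  (forall i x y, In (i, x, y) R -> Rel i (I x) (I y)) ->
  connected i R w u -> Rel i (I w) (I u).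
Proof.
  move=> Hr Hs Ht HR; elim => [x|z0 z1 u' [H|H] _ IH]; first exact: Hr.
  - exact: Ht (HR _ _ _ H) IH.
  - exact: Ht (Hs _ _ (HR _ _ _ H)) IH.
Qed.

Theorem theorem4 (m n : nat) (Hm : 1 <= m)
  (R : list (ratom m)) (G : list (lform m)) :
  derivable n R G -> valid n R G.
Proof.
  move=> D; elim: D => {R G}.
  - move=> R R' G G' PR PG _ IH W Rel V Hfr I HR.
    have [z [f [Hin Hs]]] := IH W Rel V Hfr I (fun i x y H => HR i x y (Permutation_in _ PR H)).
    exists z, f; split => //; exact: Permutation_in _ PG Hin.
  - move=> R G w p W Rel V Hfr I HR.
    case: (classic (V p (I w))) => H.
    + exists w, (FVar m p); split => //; left => //.
    + exists w, (FNVar m p); split => //; right; left => //.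
  - move=> R G w a b _ IH1 _ IH2 W Rel V Hfr I HR.
    have [z1 [f1 [H1 S1]]] := IH1 W Rel V Hfr I HR.
    have [z2 [f2 [H2 S2]]] := IH2 W Rel V Hfr I HR.
    case: H1 => [E1|[E1|H1]]; first (by exists z1, f1; split => //; left);
      last (by exists z1, f1; split => //; right).
    case: H2 => [E2|[E2|H2]]; first (by exists z2, f2; split => //; left);
      last (by exists z2, f2; split => //; right).
    case: E1 => Ew Ea; case: E2 => Ew' Eb.
    exists w, (FAnd a b); split; [left => // | split; [by rewrite Ew Ea | by rewrite Ew' Eb]].
  - move=> R G w a b _ IH W Rel V Hfr I HR.
    have [z [f [H S]]] := IH W Rel V Hfr I HR.
    case: H => [E|[E|[E|H]]].
    + by exists z, f; split => //; left.
    + case: E => Ew Ef; rewrite -Ew -Ef in S; exists w, (FOr a b); split; [left => //| by left].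
    + case: E => Ew Ef; rewrite -Ew -Ef in S; exists w, (FOr a b); split; [left => //| by right].
    + by exists z, f; split => //; right.
  - move=> R G w v a Hf _ IH W Rel V Hfr I HR.
    apply: NNPP => Hno.
    have HG := fresh_G Hf. have HRf := fresh_R Hf.
    apply Hno; exists w, (FBox a); split; first by left.
    move=> x /=.
    have HR' : forall i x0 y, In (i, x0, y) R -> Rel i (upd I v x x0) (upd I v x y).
      move=> i x0 y Hin; have [h1 h2] := HRf _ _ _ Hin.
      rewrite !upd_other //; exact: HR.
    have [z [f [H S]]] := IH W Rel V Hfr _ HR'.
    case: H => [E|[E|H]].
    + exfalso; apply: Hno; exists z, f; split; first by left.
      by rewrite -(upd_other I v x _ (HG z f (or_introl E))).
    + by case: E => Ew Ef; rewrite -Ew -Ef in S; rewrite upd_same in S.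
    + exfalso; apply: Hno; exists z, f; split; first by right.
      by rewrite -(upd_other I v x _ (HG z f (or_intror H))).
  - move=> R G w u a _ IH W Rel V Hfr I HR.
    have [z [f [H S]]] := IH W Rel V Hfr I HR.
    case: H => [E|[E|H]].
    + by exists z, f; split => //; left.
    + case: E => Ew Ef; rewrite -Ew -Ef in S; exists w, (FDia a); split; [left => //| by exists (I u)].
    + by exists z, f; split => //; right.
  - move=> R G u v Hf _ IH W Rel V Hfr I HR.
    have HG := fresh_G Hf. have HRf := fresh_R Hf.
    case: Hfr => [Hinh [Heq [Hc3 Hc4]]].
    have [x Hx] := Hc3 (fun i => I (u i)).
    have HR' : forall i x0 y, In (i, x0, y)
        (map (fun i => (i, u i, v)) (enum 'I_m) ++ R) ->
        Rel i (upd I v x x0) (upd I v x y).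
      move=> i x0 y; rewrite in_app_iff => [[Hin|Hin]].
      + move/in_map_iff: Hin => [j [E _]]; case: E => <- <- <-.
        rewrite upd_same /upd; case: (Nat.eqb_spec (u j) v) => _.
        * by case: (Heq j) => r _; apply: r.
        * exact: Hx.
      + have [h1 h2] := HRf _ _ _ Hin; rewrite !upd_other //; exact: HR.
    have [z [f [H S]]] := IH W Rel V (conj Hinh (conj Heq (conj Hc3 Hc4))) _ HR'.
    exists z, f; split => //; by rewrite -(upd_other I v x _ (HG z f H)).
  - move=> R G i w v a Hf _ IH W Rel V Hfr I HR.
    apply: NNPP => Hno.
    have HG := fresh_G Hf. have HRf := fresh_R Hf.
    have Hwv : w <> v by apply: (HG w (FAgB i a)); left.
    apply Hno; exists w, (FAgB i a); split; first by left.
    move=> x /= Hwx.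
    have HR' : forall j x0 y, In (j, x0, y) ((i, w, v) :: R) ->
        Rel j (upd I v x x0) (upd I v x y).
      move=> j x0 y [E|Hin].
      + by case: E => <- <- <-; rewrite upd_same upd_other.
      + have [h1 h2] := HRf _ _ _ Hin; rewrite !upd_other //; exact: HR.
    have [z [f [H S]]] := IH W Rel V Hfr _ HR'.
    case: H => [E|[E|H]].
    + exfalso; apply: Hno; exists z, f; split; first by left.
      by rewrite -(upd_other I v x _ (HG z f (or_introl E))).
    + by case: E => Ew Ef; rewrite -Ew -Ef in S; rewrite upd_same in S.
    + exfalso; apply: Hno; exists z, f; split; first by right.
      by rewrite -(upd_other I v x _ (HG z f (or_intror H))).
  - move=> R G i w u a Hc _ IH W Rel V Hfr I HR.
    have [z [f [H S]]] := IH W Rel V Hfr I HR.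
    case: H => [E|[E|H]].
    + by exists z, f; split => //; left.
    + case: E => Ew Ef; rewrite -Ew -Ef in S; exists w, (FAgD i a); split; first by left.
      case: Hfr => _ [Heq _]; case: (Heq i) => r [s t].
      exists (I u); split => //; exact: conn_rel r s t HR Hc.
    + by exists z, f; split => //; right.
  - move=> R G i w Hn _ IH W Rel V Hfr I HR.
    have Hfr' := Hfr; case: Hfr' => _ [_ [_ Hc4]].
    have [k [j [Hkj Hr]]] := Hc4 Hn i (fun l => I (w l)).
    apply: (IH k j Hkj W Rel V Hfr I).
    move=> i' x y [E|Hin]; last exact: HR.
    by case: E => <- <- <-.
Qed.
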